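(* Let $n\geq1$ and $A\in M_n(\mathbb Z)$ with $\det(A)\neq0$. Then there exist integers $n_1,n_2\geq0$ with $n_1+n_2=n$, a matrix $A_1\in M_{n_1}(\mathbb Z)$ all of whose eigenvalues are roots of unity, a positive matrix $A_2\in M_{n_2}(\mathbb Z)$, and $P\in M_n(\mathbb Z)$ with $\det(P)\neq0$ such that $\varphi_A\circ\varphi_P=\varphi_P\circ g$, where $g:\mathbb G_m^n=\mathbb G_m^{n_1}\times\mathbb G_m^{n_2}\to\mathbb G_m^{n_1}\times\mathbb G_m^{n_2}$ is $g(u_1,u_2)=(\varphi_{A_1}(u_1),\varphi_{A_2}(u_2))$.
   Context: Work over an algebraically closed field of characteristic zero. For $A=(a_{ij})\in M_n(\mathbb Z)$, $\varphi_A:\mathbb G_m^n\to\mathbb G_m^n$ is the group endomorphism $(u_1,\dots,u_n)\mapsto(u_1^{a_{11}}\cdots u_n^{a_{1n}},\dots,u_1^{a_{n1}}\cdots u_n^{a_{nn}})$. A matrix $A$ is positive if every eigenvalue of $A$ is neither $0$ nor a root of unity. *)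

(* Defs.v *)
From HB Require Import structures.
From mathcomp Require Import all_boot all_order all_algebra.
Set Implicit Arguments. Unset Strict Implicit. Unset Printing Implicit Defensive.
Import Order.TTheory GRing.Theory Num.Theory.
Local Open Scope ring_scope.

(* Points of G_m^n over a field K are represented as functions 'I_n -> K;
   membership in the torus is the condition that every coordinate is nonzero. *)
Definition in_torus (K : fieldType) (n : nat) (u : 'I_n -> K) : Prop :=
  forall i, u i != 0.

Definition phi (K : fieldType) (n : nat) (A : 'M[int]_n) (u : 'I_n -> K)
  : 'I_n -> K :=
  fun i => \prod_(j < n) (u j) ^ (A i j).

Definition mxK (K : fieldType) (n : nat) (A : 'M[int]_n) : 'M[K]_n :=
  map_mx (fun z : int => z%:~R) A.

Definition root_of_unity (K : fieldType) (x : K) : Prop :=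
  exists k : nat, (0 < k)%N /\ x ^+ k = 1.

Definition unipotent_eigs (K : fieldType) (n : nat) (A : 'M[int]_n) : Prop :=
  forall a : K, eigenvalue (mxK K A) a -> root_of_unity a.

Definition positive_mx (K : fieldType) (n : nat) (A : 'M[int]_n) : Prop :=
  forall a : K, eigenvalue (mxK K A) a -> a != 0 /\ ~ root_of_unity a.

(* g(u1,u2) = (phi_{A1} u1, phi_{A2} u2) on G_m^{n1} x G_m^{n2} = G_m^n *)
Definition split_map (K : fieldType) (n1 n2 n : nat) (H : (n1 + n2)%N = n)
  (A1 : 'M[int]_n1) (A2 : 'M[int]_n2) (u : 'I_n -> K) : 'I_n -> K :=
  fun i =>
    match split (cast_ord (esym H) i) with
    | inl j => phi A1 (fun k => u (cast_ord H (lshift n2 k))) j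
    | inr j => phi A2 (fun k => u (cast_ord H (rshift n1 k))) j
    end.

(* Main.v *)
Require Import Defs.
From HB Require Import structures.
From mathcomp Require Import all_boot all_order all_algebra.
From Stdlib Require Import FunctionalExtensionality Classical.
Set Implicit Arguments. Unset Strict Implicit. Unset Printing Implicit Defensive.
Import Order.TTheory GRing.Theory Num.Theory.
Local Open Scope ring_scope.
Lemma fitting (F : fieldType) n' (C : 'M[F]_n'.+1) :
  exists M, (0 < M)%N /\ forall w z : 'cV_n'.+1,
    C ^+ M *m w = 0 -> w = C ^+ M *m z -> w = 0.
Proof.
have [m [g Hg Hp]] := multiplicity_XsubC (char_poly C) 0.
have pn0 : char_poly C != 0 by rewrite monic_neq0 // char_poly_monic.
rewrite pn0 /= in Hg.
exists m.+1; split => // w z h0 hw.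
have cop : coprimep ('X ^+ m.+1) g.
  by apply: coprimep_expl; rewrite coprimep_sym -['X]subr0 -polyC0 coprimep_XsubC.
have [[u v] /= huv] := Bezout_eq1_coprimepP _ _ cop.
have := congr1 (horner_mx C) huv.
rewrite rmorph1 rmorphD !rmorphM /= rmorphXn /= horner_mx_X => E.
have hg : horner_mx C g *m w = 0.
  rewrite hw !mulmxA mulmxE exprSr mulrA.
  have := Cayley_Hamilton C; rewrite Hp rmorphM rmorphXn /= rmorphB /= horner_mx_X horner_mx_C.
  have -> : (0 : F)%:M = 0 :> 'M_n'.+1 by apply/matrixP => i j; rewrite !mxE mul0rn.
  rewrite subr0 => ->.
  by rewrite mul0r mul0mx.
by rewrite -[w]mul1mx idmxE -E mulmxDl -!mulmxE -!mulmxA h0 hg !mulmx0 addr0.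
Qed.
Lemma char_poly_tr (F : fieldType) n (A : 'M[F]_n) : char_poly A^T = char_poly A.
Proof.
rewrite /char_poly -det_tr; congr (\det _).
rewrite /char_poly_mx linearB /= tr_scalar_mx; congr (_ - _).
by apply/matrixP => i j; rewrite !mxE.
Qed.

Lemma eig_tr (F : fieldType) n (A : 'M[F]_n) a : eigenvalue A^T a = eigenvalue A a.
Proof. by rewrite !eigenvalue_root_char char_poly_tr. Qed.

Lemma col_eig (F : fieldType) n (A : 'M[F]_n) a (v : 'cV_n) :
  v != 0 -> A *m v = a *: v -> eigenvalue A a.
Proof.
move=> vn0 hv; rewrite -eig_tr; apply/eigenvalueP; exists v^T.
  by rewrite -trmx_mul hv linearZ.
by apply: contra vn0 => /eqP h; rewrite -[v]trmxK h linear0.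
Qed.

Lemma eig_col (F : fieldType) n (A : 'M[F]_n) a :
  eigenvalue A a -> exists2 v : 'cV_n, v != 0 & A *m v = a *: v.
Proof.
rewrite -eig_tr => /eigenvalueP [v hv vn0]; exists v^T.
  by apply: contra vn0 => /eqP h; rewrite -[v]trmxK h linear0.
by rewrite -[A]trmxK -trmx_mul hv linearZ.
Qed.

Lemma roots_N (K : fieldType) (s : seq K) :
  exists N, (0 < N)%N /\ forall a, a \in s -> Defs.root_of_unity a -> a ^+ N = 1.
Proof.
elim: s => [|z s [N [N0 hN]]]; first by exists 1%N.
have [[k [k0 hk]]|nr] := classic (Defs.root_of_unity z).
  exists (k * N)%N; split; first by rewrite muln_gt0 k0.
  move=> a; rewrite inE => /orP [/eqP -> _|ha hr]; first by rewrite exprM hk expr1n.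
  by rewrite mulnC exprM hN // expr1n.
exists N; split => // a; rewrite inE => /orP [/eqP -> //|ha]; exact: hN.
Qed.

Lemma exists_N (K : closedFieldType) n (A : 'M[K]_n) :
  exists N, (0 < N)%N /\ forall a, eigenvalue A a -> Defs.root_of_unity a -> a ^+ N = 1.
Proof.
have [rs hrs] := closed_field_poly_normal (char_poly A).
have [N [N0 hN]] := roots_N rs; exists N; split => // a ha; apply: hN.
move: ha; rewrite eigenvalue_root_char hrs.
have /monicP -> := char_poly_monic A.
by rewrite scale1r root_prod_XsubC.
Qed.

Lemma eig_pow (F : fieldType) m n (E : 'M[F]_n) (v : 'M_(m, n)) c j :
  v *m E = c *: v -> v *m E ^+ j = c ^+ j *: v.
Proof.
move=> h; elim: j => [|j IH]; first by rewrite expr0 scale1r -idmxE mulmx1.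
by rewrite exprSr -mulmxE mulmxA IH -scalemxAl h scalerA exprSr.
Qed.

Lemma pow_inter (R : comNzRingType) n k (A : 'M[R]_n) (A1 : 'M[R]_k) (P : 'M_(n, k)) j :
  A *m P = P *m A1 -> A ^+ j *m P = P *m A1 ^+ j.
Proof.
move=> h; elim: j => [|j IH]; first by rewrite !expr0 -!idmxE mul1mx mulmx1.
by rewrite !exprS -!mulmxE -mulmxA IH mulmxA h mulmxA.
Qed.
Lemma cancel_l r m (D : 'M[int]_r) (Z : 'M[int]_(r, m)) :
  \det D != 0 -> D *m Z = 0 -> Z = 0.
Proof.
move=> dD h; have := congr1 (mulmx (\adj D)) h.
rewrite mulmxA mul_adj_mx mul_scalar_mx mulmx0 => h2.
apply/matrixP => i j; move/matrixP: h2 => /(_ i j); rewrite !mxE => /eqP.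
by rewrite mulf_eq0 (negbTE dD) /= => /eqP.
Qed.

Lemma cancel_r r m (D : 'M[int]_r) (Z : 'M[int]_(m, r)) :
  \det D != 0 -> Z *m D = 0 -> Z = 0.
Proof.
move=> dD h; have := congr1 (mulmx^~ (\adj D)) h.
rewrite -mulmxA mul_mx_adj mul0mx mul_mx_scalar => h2.
apply/matrixP => i j; move/matrixP: h2 => /(_ i j); rewrite !mxE => /eqP.
by rewrite mulf_eq0 (negbTE dD) /= => /eqP.
Qed.

Lemma blocks n r k (H : (r + k)%N = n) (A B L R : 'M[int]_n) (d : seq int) :
  L \in unitmx -> R \in unitmx ->
  (forall i : 'I_n, (d`_i != 0) = (i < r)%N) ->
  B = L *m (\matrix_(i, j) (d`_i *+ (i == j :> nat))) *m R ->
  A *m B = B *m A ->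
  exists (P1 : 'M[int]_(n,k)) (P2 : 'M[int]_(n,r)) (A1 : 'M[int]_k) (A2 : 'M[int]_r)
         (Q1 : 'M[int]_(k, n)) (Q2 : 'M[int]_(r,n)) (S : 'M[int]_(n, r)) (D0 : 'M[int]_r),
   [/\ A *m P1 = P1 *m A1, A *m P2 = P2 *m A2, B *m P1 = 0,
       Q1 *m P1 = 1%:M & Q2 *m P2 = 1%:M] /\ (P2 *m D0 = B *m S /\ \det D0 != 0).
Proof.
subst n => uL uR hd hB hAB.
set Dl := \matrix_(i, j) _ in hB.
set D0 := ulsubmx Dl.
have hDl : Dl = block_mx D0 0 0 0.
  rewrite -[Dl in LHS]submxK /D0; congr block_mx; apply/matrixP => i j; rewrite !mxE /=.
  - have -> : (i == r + j :> nat) = false.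
      by apply/negbTE; rewrite neq_ltn (leq_trans (ltn_ord i) (leq_addr _ _)).
    by rewrite mulr0n.
  - have -> : (r + i == j :> nat) = false.
      by apply/negbTE; rewrite neq_ltn (leq_trans (ltn_ord j) (leq_addr _ _)) orbT.
    by rewrite mulr0n.
  - have := hd (rshift r i); rewrite /= ltnNge leq_addr /= => /negbFE/eqP ->.
    by rewrite mul0rn.
have dD0 : \det D0 != 0.
  have -> : D0 = diag_mx (\row_i d`_i).
    by apply/matrixP => i j; rewrite !mxE.
  rewrite det_diag; apply/prodf_neq0 => i _; rewrite mxE.
  by rewrite (hd (lshift k i)) /= ltn_ord.
set Li := invmx L; set Ri := invmx R.
set X := R *m A *m Ri; set Y := Li *m A *m L.
have key : Dl *m X = Y *m Dl.
  transitivity (Li *m (B *m A) *m Ri).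
    by rewrite hB /X /Y !mulmxA (mulVmx uL) mul1mx.
  rewrite -hAB hB /Y !mulmxA -[Li *m A *m L *m Dl *m R *m Ri]mulmxA (mulmxV uR).
  by rewrite mulmx1.
move: key; rewrite hDl -[X]submxK -[Y]submxK !mulmx_block.
rewrite !mul0mx !mulmx0 !addr0 => /eq_block_mx [_ hX hY _].
have X12 : ursubmx X = 0 by apply: (cancel_l dD0); rewrite hX.
have Y21 : dlsubmx Y = 0 by apply: (cancel_r dD0); rewrite -hY.
have AR : A *m Ri = Ri *m X by rewrite /X !mulmxA (mulVmx uR) mul1mx.
have AL : A *m L = L *m Y by rewrite /Y !mulmxA (mulmxV uL) mul1mx.
have BR : B *m Ri = L *m Dl by rewrite hB -mulmxA (mulmxV uR) mulmx1.
exists (rsubmx Ri), (lsubmx L), (drsubmx X), (ulsubmx Y), (dsubmx R), (usubmx Li),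
  (lsubmx Ri), D0; split; [split|split] => //.
- rewrite mulmx_rsub AR -mulmx_rsub -[X in Ri *m rsubmx X]submxK block_mxEh row_mxKr.
  by rewrite X12 -{1}[Ri]hsubmxK mul_row_col mulmx0 add0r.
- rewrite mulmx_lsub AL -mulmx_lsub -[Y in L *m lsubmx Y]submxK block_mxEh row_mxKl.
  by rewrite Y21 -{1}[L]hsubmxK mul_row_col mulmx0 addr0.
- rewrite mulmx_rsub BR -mulmx_rsub hDl block_mxEh row_mxKr col_mx0 mulmx0 //.
- have : col_mx (usubmx R) (dsubmx R) *m row_mx (lsubmx Ri) (rsubmx Ri) = 1%:M.
    by rewrite vsubmxK hsubmxK mulmxV.
  by rewrite mul_col_row scalar_mx_block; case/eq_block_mx.
- have : col_mx (usubmx Li) (dsubmx Li) *m row_mx (lsubmx L) (rsubmx L) = 1%:M.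
    by rewrite vsubmxK hsubmxK mulVmx.
  by rewrite mul_col_row scalar_mx_block; case/eq_block_mx.
- rewrite (mulmx_lsub B) BR -mulmx_lsub hDl block_mxEh row_mxKl.
  by rewrite -[L in RHS]hsubmxK mul_row_col mulmx0 addr0.
Qed.

Lemma intr0 (K : fieldType) (HK : [pchar K] =i pred0) (z : int) :
  (z%:~R : K) = 0 -> z = 0.
Proof.
have h := (pcharf0P K).1 HK.
case: z => m.
  by change ((m%:R : K) = 0 -> Posz m = 0) => /eqP; rewrite h => /eqP ->.
rewrite NegzE mulrNz => /eqP; rewrite oppr_eq0.
by change ((m.+1%:R : K) == 0 -> Negz m = 0); rewrite h.
Qed.

Lemma eig_pow_col (F : fieldType) m n (E : 'M[F]_n) (v : 'M_(n, m)) c j :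
  E *m v = c *: v -> E ^+ j *m v = c ^+ j *: v.
Proof.
move=> h; elim: j => [|j IH]; first by rewrite expr0 scale1r -idmxE mul1mx.
by rewrite exprS -mulmxE -mulmxA IH -scalemxAr h scalerA exprSr.
Qed.

Lemma smith_r n (d : seq int) : sorted dvdz d ->
  exists r, (r <= n)%N /\ forall i : 'I_n, (d`_i != 0) = (i < r)%N.
Proof.
move=> dS; exists (minn (find (pred1 (0:int)) d) n); split; first exact: geq_minr.
move=> i; rewrite leq_min ltn_ord andbT.
case: (ltnP i (find (pred1 (0:int)) d)) => hi.
  by have := before_find 0 hi => /= ->.
apply/negbTE; rewrite negbK.
case: (ltnP i (size d)) => hs; last by rewrite nth_default.
have hf : (find (pred1 (0:int)) d < size d)%N by apply: leq_ltn_trans hs.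
have := nth_find 0 (_ : has (pred1 (0:int)) d); rewrite has_find => /(_ hf) /= /eqP h0.
have := sorted_leq_nth (@dvdz_trans) dvdzz 0 dS; move=> /(_ (find (pred1 (0:int)) d) i).
by rewrite !inE hf hs h0 dvd0z => /(_ isT isT hi).
Qed.

Lemma phi_torus (K : fieldType) n (A : 'M[int]_n) (u : 'I_n -> K) :
  in_torus u -> in_torus (phi A u).
Proof.
move=> hu i; rewrite /phi; apply/prodf_neq0 => j _; exact: expfz_neq0.
Qed.

Lemma phiM (K : fieldType) n (A P : 'M[int]_n) (u : 'I_n -> K) :
  in_torus u -> phi A (phi P u) = phi (A *m P) u.
Proof.
move=> hu; apply: functional_extensionality => i; rewrite /phi.
under eq_bigr => j _ do rewrite (big_morph (fun x => x ^ A i j) (fun x y => expfzMl x y _) (exp1rz _ _)).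
rewrite exchange_big /=; apply: eq_bigr => k _.
rewrite mxE.
under eq_bigr => j _ do rewrite exprz_exp mulrC.
elim/big_rec2: _ => [|j x y _ ->]; first by rewrite expr0z.
by rewrite expfzDr.
Qed.

Lemma split_mapE (K : fieldType) n1 n2 (A1 : 'M[int]_n1) (A2 : 'M[int]_n2)
  (u : 'I_(n1 + n2) -> K) :
  split_map (erefl (n1 + n2)) A1 A2 u = phi (block_mx A1 0 0 A2) u.
Proof.
apply: functional_extensionality => i; rewrite /split_map /phi big_split_ord /=.
rewrite cast_ord_id.
case: split_ordP => j ->.
  under [X in _ = X * _]eq_bigr => k _ do rewrite block_mxEul.
  under [X in _ = _ * X]eq_bigr => k _ do rewrite block_mxEur mxE expr0z.
  rewrite big1_eq mulr1; apply: eq_bigr => k _; by rewrite cast_ord_id.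
under [X in _ = X * _]eq_bigr => k _ do rewrite block_mxEdl mxE expr0z.
under [X in _ = _ * X]eq_bigr => k _ do rewrite block_mxEdr.
rewrite big1_eq mul1r; apply: eq_bigr => k _; by rewrite cast_ord_id.
Qed.

Notation mR K X := (map_mx (fun z : int => (z%:~R : K)) X).

Lemma core (K : closedFieldType) (HK : [pchar K] =i pred0) n' (A : 'M[int]_n'.+1)
  (HA : \det A != 0) :
  exists k r (H : (k + r)%N = n'.+1) (A1 : 'M[int]_k) (A2 : 'M[int]_r)
    (P1 : 'M[int]_(n'.+1, k)) (P2 : 'M[int]_(n'.+1, r)),
   [/\ A *m P1 = P1 *m A1, A *m P2 = P2 *m A2, unipotent_eigs K A1, positive_mx K A2 &
       forall (x : 'cV[K]_k) (y : 'cV[K]_r), mR K P1 *m x + mR K P2 *m y = 0 -> x = 0 /\ y = 0].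
Proof.
have [N [N0 hN]] := exists_N (mR K A).
set C := mR K A ^+ N - 1.
have [M [M0 hM]] := fitting C.
set B := (A ^+ N - 1) ^+ M.
have BK : mR K B = C ^+ M by rewrite rmorphXn rmorphB rmorphXn rmorph1.
have hAB : A *m B = B *m A.
  rewrite mulmxE; apply: commrX; apply: commrB; [apply: commrX; exact: commr_refl|exact: commr1].
have [L uL [R uR [d dS hB]]] := int_Smith_normal_form B.
have [r [rn hd]] := smith_r n'.+1 dS.
have H : (r + (n'.+1 - r))%N = n'.+1 by rewrite subnKC.
have [P1 [P2 [A1 [A2 [Q1 [Q2 [S [D0 [[h1 h2 h3 h4 h5] [h6 h7]]]]]]]]]] :=
  blocks H uL uR hd hB hAB.
have H' : (n'.+1 - r + r)%N = n'.+1 by rewrite addnC.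
exists (n'.+1 - r)%N, r, H', A1, A2, P1, P2.
have mK1 : forall m, mR K (1%:M : 'M[int]_m) = 1%:M by move=> m; rewrite map_mx1.
have injP1 : forall x : 'cV[K]_(n'.+1 - r), mR K P1 *m x = 0 -> x = 0.
  move=> x hx; rewrite -[x]mul1mx -(mK1 _) -h4 map_mxM -mulmxA.
  by rewrite  hx mulmx0.
have injP2 : forall x : 'cV[K]_r, mR K P2 *m x = 0 -> x = 0.
  move=> x hx; rewrite -[x]mul1mx -(mK1 _) -h5 map_mxM -mulmxA.
  by rewrite  hx mulmx0.
have uD0 : mR K D0 \in unitmx.
  rewrite unitmxE unitfE det_map_mx; apply: contra h7 => /eqP/(intr0 HK) ->.
  by [].
have imP2 : forall y : 'cV[K]_r, exists z, mR K P2 *m y = mR K B *m z.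
  move=> y; exists (mR K S *m invmx (mR K D0) *m y).
  rewrite !mulmxA -map_mxM -h6 map_mxM  .
  by rewrite -(mulmxA (mR K P2)) (mulmxV uD0) mulmx1.
have mKA : forall m (X : 'M[int]_(n'.+1, m)) (Y : 'M[int]_m) ,
    A *m X = X *m Y -> mR K A *m mR K X = mR K X *m mR K Y.
  by move=> m X Y hXY; rewrite -!map_mxM hXY.
rewrite /unipotent_eigs /positive_mx /mxK; split => //.
-
  have E1 : (A1 ^+ N - 1) ^+ M = 0.
    have e1 : (A ^+ N - 1) *m P1 = P1 *m (A1 ^+ N - 1).
      by rewrite mulmxBl mulmxBr (pow_inter _ h1) -!idmxE mul1mx mulmx1.
    have e2 := pow_inter M e1.
    rewrite -[_ ^+ M]mul1mx -h4 -mulmxA -e2 -/B.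
    by rewrite h3 mulmx0.
  move=> a /eigenvalueP [v hv vn0]; exists N; split => //.
  have hv1 := eig_pow N hv.
  have hv2 : v *m (mR K A1 ^+ N - 1) = (a ^+ N - 1) *: v.
    by rewrite mulmxBr hv1 scalerBl scale1r -idmxE mulmx1.
  have := eig_pow M hv2.
  have -> : (mR K A1 ^+ N - 1) ^+ M = 0.
    by have := congr1 (map_mx (fun z : int => (z%:~R : K))) E1; rewrite map_mx0 rmorphXn rmorphB rmorph1 rmorphXn.
  rewrite mulmx0 => /esym/eqP; rewrite scaler_eq0 (negbTE vn0) orbF expf_eq0.
  by case/andP => _; rewrite subr_eq0 => /eqP.
-
  move=> a /eig_col [w wn0 hw].
  set v := mR K P2 *m w.
  have vn0 : v != 0 by apply: contra wn0 => /eqP /injP2 ->.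
  have hv : mR K A *m v = a *: v.
    by rewrite /v mulmxA (mKA _ _ _ h2) -mulmxA hw scalemxAr.
  split.
    apply: contra vn0 => /eqP a0.
    have uA : mR K A \in unitmx.
      rewrite unitmxE unitfE det_map_mx; apply: contra HA => /eqP/(intr0 HK) ->.
      by [].
    by rewrite -[v]mul1mx -(mulVmx uA) -mulmxA hv a0 scale0r mulmx0.
  move=> hr.
  have aN := hN a (col_eig vn0 hv) hr.
  have Cv : C *m v = 0.
    by rewrite /C mulmxBl (eig_pow_col N hv) aN scale1r -idmxE mul1mx subrr.
  have [z hz] := imP2 w.
  have CMv : C ^+ M *m v = 0.
    have [M' eM] : exists M', M = M'.+1 by case: (M) M0 => // M' _; exists M'.
    by rewrite eM exprSr -mulmxE -mulmxA Cv mulmx0.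
  move: vn0; rewrite (hM v z) ?eqxx //; by rewrite /v hz BK.
-
  move=> x y hxy.
  have e : mR K P1 *m x = - (mR K P2 *m y) by apply/eqP; rewrite -addr_eq0 hxy.
  have [z hz] := imP2 y.
  have x0 : mR K P1 *m x = 0.
    apply: (hM _ (- z)); last by rewrite e hz BK mulmxN.
    by rewrite -BK mulmxA -map_mxM h3 map_mx0 mul0mx.
  have y0 : mR K P2 *m y = 0 by apply/eqP; rewrite -oppr_eq0 -e x0.
  by split; [apply: injP1|apply: injP2].
Qed.

Lemma finish (K : closedFieldType) n k r (H : (k + r)%N = n) (A : 'M[int]_n)
  (A1 : 'M[int]_k) (A2 : 'M[int]_r) (P1 : 'M[int]_(n, k)) (P2 : 'M[int]_(n, r)) :
  A *m P1 = P1 *m A1 -> A *m P2 = P2 *m A2 -> unipotent_eigs K A1 -> positive_mx K A2 ->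
  (forall (x : 'cV[K]_k) (y : 'cV[K]_r), mR K P1 *m x + mR K P2 *m y = 0 -> x = 0 /\ y = 0) ->
  exists (H : (k + r)%N = n) (A1 : 'M[int]_k) (A2 : 'M[int]_r) (P : 'M[int]_n),
    [/\ unipotent_eigs K A1, positive_mx K A2, \det P != 0 &
        forall u : 'I_n -> K, in_torus u ->
          phi A (phi P u) = phi P (split_map H A1 A2 u)].
Proof.
subst n => h1 h2 hue hp hind.
exists erefl, A1, A2, (row_mx P1 P2); split => //.
- apply/negP => /eqP d0.
  have : \det (mR K (row_mx P1 P2))^T == 0.
    by rewrite det_tr det_map_mx d0 rmorph0.
  case/det0P => v vn0 hv.
  have hw : row_mx (mR K P1) (mR K P2) *m col_mx (usubmx v^T) (dsubmx v^T) = 0.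
    by rewrite vsubmxK -map_row_mx -[_ *m v^T]trmxK trmx_mul trmxK hv linear0.
  rewrite mul_row_col in hw; have [x0 y0] := hind _ _ hw.
  move: vn0; rewrite -[v]trmxK -[v^T]vsubmxK x0 y0 col_mx0 linear0 eqxx //.
- move=> u hu; rewrite phiM // split_mapE phiM ?phi_torus //; congr phi.
  by rewrite mul_mx_row mul_row_block !mulmx0 addr0 add0r h1 h2.
Qed.

Unset Implicit Arguments.
Set Strict Implicit.
Theorem lemma2p6 (K : closedFieldType) (HK : [pchar K] =i pred0)
  (n : nat) (Hn : (1 <= n)%N) (A : 'M[int]_n) (HA : \det A != 0) :
  exists (n1 n2 : nat) (H : (n1 + n2)%N = n)
         (A1 : 'M[int]_n1) (A2 : 'M[int]_n2) (P : 'M[int]_n),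
    [/\ unipotent_eigs K A1, positive_mx K A2, \det P != 0 &
        forall u : 'I_n -> K, in_torus u ->
          phi A (phi P u) = phi P (split_map H A1 A2 u)].
Proof.
case: n Hn A HA => [//|n'] _ A HA.
have [k [r [H [A1 [A2 [P1 [P2 [h1 h2 hu hp hind]]]]]]]] := core HK HA.
exists k, r; have := finish H h1 h2 hu hp hind. done.
Qed.
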